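(* Let $n\ge 1$ and let $P=P_1\otimes\cdots\otimes P_n\in\mathcal{P}_n$ satisfy $P^2=I$ and $P\neq\pm I$. Then there exists a unique $Z$-circuit $L$ on $n$ qubits such that $L\bullet P=Z\otimes I\otimes\cdots\otimes I$.
   Context: Matrices: $X=\begin{bmatrix}0&1\\1&0\end{bmatrix}$, $Z=\begin{bmatrix}1&0\\0&-1\end{bmatrix}$, $H=\frac{1}{\sqrt2}\begin{bmatrix}1&1\\1&-1\end{bmatrix}$, $CZ=\mathrm{diag}(1,1,1,-1)$. Operators on $n$ qubits act on $(\mathbb{R}^2)^{\otimes n}$, qubit $1$ being the first tensor factor; a one-qubit gate on qubit $i$, or a two-qubit gate on qubits $i,i+1$ (with qubit $i$ the first tensor factor of the gate, called its upper qubit, and $i+1$ its lower qubit), denotes that matrix tensored with identities on the other qubits. For matrices $C,P$, $C\bullet P=CPC^{-1}$. Real Pauli group: $\mathcal{P}_n=\{\pm(P_1\otimes\cdots\otimes P_n)\mid P_i\in\{I,X,Z,XZ\}\}$. A circuit is a finite sequence of gates $g_1,\dots,g_k$ ($g_1$ applied first); its operator is $g_k\cdots g_1$, and we write $L\bullet P$ for (operator of $L$)$\bullet P$. Derived generators (formal symbols, each with a defining gate sequence; within a two-qubit symbol, subscript $1$ is the upper and $2$ the lower qubit; gates separated by commas, '';'' separates steps): $A_1$ = empty, $A_2$ = $H$, $A_3$ = empty; $C_1$ = empty, $C_2$ = $H;Z;H$ (i.e. $X$); $B_1=B_5$ = $H_2;\,CZ;\,H_1,H_2;\,CZ;\,H_1,H_2;\,CZ$;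 $B_2=B_6$ = $CZ;\,H_1,H_2;\,CZ$; $B_3=B_7$ = $H_1;\,CZ;\,H_1,H_2;\,CZ$; $B_4=B_8$ = $H_2;\,CZ;\,H_2;\,CZ;\,H_1,H_2;\,CZ$. Symbols with equal defining sequences (e.g. $A_1,A_3$, or $B_1,B_5$) are nevertheless distinct symbols. Types: each of these symbols carries types from $\{\text{single},\text{double}\}$: $A_1,A_2$ have output type single and $A_3$ output type double; $B_j$ has an input type (on its lower qubit) and an output type (on its upper qubit): $B_1,B_2,B_3$ single$\to$single, $B_4$ single$\to$double, $B_5,B_6,B_7$ double$\to$double, $B_8$ double$\to$single; $C_1,C_2$ have input type single. A $Z$-circuit on $n$ qubits is a sequence of symbols of the following form: for some $m\in\{1,\dots,n\}$, a symbol $A_a$ on qubit $m$, then $B_{b_{m-1}}$ on qubits $m-1,m$, then $B_{b_{m-2}}$ on qubits $m-2,m-1$, ..., then $B_{b_1}$ on qubits $1,2$, then $C_c$ on qubit $1$, such that the input type of each $B$ or $C$ symbol equals the output type of the symbol immediately preceding it in this sequence. Two $Z$-circuits are equal when they have the same $m$ and the same sequence of symbols. *)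

(* Defs.v *)
(* Real matrices are taken over an arbitrary real closed
   field R (this contains the real numbers; only sqrt 2 is needed). *)
From HB Require Import structures.
From mathcomp Require Import all_boot all_order all_algebra.
Set Implicit Arguments. Unset Strict Implicit. Unset Printing Implicit Defensive.
Import Order.TTheory GRing.Theory Num.Theory.
Local Open Scope ring_scope.

Section Qubits.
Variable R : rcfType.

Definition Xm : 'M[R]_2 := \matrix_(i, j) (if i == j then 0 else 1).
Definition Zm : 'M[R]_2 :=
  \matrix_(i, j) (if i == j then (if nat_of_ord i == 0%N then 1 else -1) else 0).
Definition Hm : 'M[R]_2 :=
  (Num.sqrt 2)^-1 *:
  \matrix_(i, j) (if (nat_of_ord i == 1%N) && (nat_of_ord j == 1%N) then -1 else 1).
Definition CZm : 'M[R]_4 :=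
  \matrix_(i, j) (if i == j then (if nat_of_ord i == 3%N then -1 else 1) else 0).

(* ---------- n-qubit operators: (R^2)^{tensor n}, dimension 2^n ----------
   Basis index i : 'I_(2^n); qubit k (1-based, 1 <= k <= n) is the binary
   digit of weight 2^(n-k), so qubit 1 is the first (most significant)
   tensor factor, exactly as in the Kronecker product convention. *)
Variable n : nat.
Definition bit (i : 'I_(2 ^ n)) (k : nat) : bool := odd (i %/ 2 ^ (n - k)).
Definition idx2 (b : bool) : 'I_2 := inord b.
Definition idx4 (b1 b2 : bool) : 'I_4 := inord (2 * b1 + b2).

(* tensor product P_1 (x) ... (x) P_n, factor l : 'I_n acting on qubit l+1 *)
Definition tens (fs : 'I_n -> 'M[R]_2) : 'M[R]_(2 ^ n) :=
  \matrix_(i, j) \prod_(l < n) fs l (idx2 (bit i l.+1)) (idx2 (bit j l.+1)).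

Definition oneq (k : nat) (g : 'M[R]_2) : 'M[R]_(2 ^ n) :=
  \matrix_(i, j) (g (idx2 (bit i k)) (idx2 (bit j k)) *
     \prod_(l < n | l.+1 != k) (bit i l.+1 == bit j l.+1)%:R).

Definition twoq (k : nat) (g : 'M[R]_4) : 'M[R]_(2 ^ n) :=
  \matrix_(i, j) (g (idx4 (bit i k) (bit i k.+1)) (idx4 (bit j k) (bit j k.+1)) *
     \prod_(l < n | (l.+1 != k) && (l.+1 != k.+1)) (bit i l.+1 == bit j l.+1)%:R).

(* operator of a circuit g_1, ..., g_k (g_1 applied first): g_k ... g_1 *)
Definition circ_op (gs : seq 'M[R]_(2 ^ n)) : 'M[R]_(2 ^ n) :=
  foldl (fun acc g => g *m acc) 1%:M gs.

(* C \bullet P = C P C^{-1} *)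
Definition conjm (C P : 'M[R]_(2 ^ n)) : 'M[R]_(2 ^ n) := C *m P *m invmx C.

Inductive pauli := pI | pX | pZ | pXZ.
Definition pmat (p : pauli) : 'M[R]_2 :=
  match p with pI => 1%:M | pX => Xm | pZ => Zm | pXZ => Xm *m Zm end.
Definition in_real_pauli (P : 'M[R]_(2 ^ n)) : Prop :=
  exists (s : bool) (ps : 'I_n -> pauli),
    P = (-1) ^+ s *: tens (fun l => pmat (ps l)).

Definition Z1 : 'M[R]_(2 ^ n) :=
  tens (fun l => if nat_of_ord l == 0%N then Zm else 1%:M).

Inductive ty := single | double.
Inductive Asym := A1 | A2 | A3.
Inductive Bsym := B1 | B2 | B3 | B4 | B5 | B6 | B7 | B8.
Inductive Csym := C1 | C2.

Definition A_out (a : Asym) : ty := match a with A1 | A2 => single | A3 => double end.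
Definition B_in (b : Bsym) : ty :=
  match b with B1 | B2 | B3 | B4 => single | _ => double end.
Definition B_out (b : Bsym) : ty :=
  match b with B1 | B2 | B3 | B8 => single | _ => double end.
Definition C_in (c : Csym) : ty := single.

Definition A_gates (m : nat) (a : Asym) : seq 'M[R]_(2 ^ n) :=
  match a with A2 => [:: oneq m Hm] | _ => [::] end.
Definition B_gates (k : nat) (b : Bsym) : seq 'M[R]_(2 ^ n) :=
  let H1 := oneq k Hm in let H2 := oneq k.+1 Hm in let CZ := twoq k CZm in
  match b with
  | B1 | B5 => [:: H2; CZ; H1; H2; CZ; H1; H2; CZ]
  | B2 | B6 => [:: CZ; H1; H2; CZ]
  | B3 | B7 => [:: H1; CZ; H1; H2; CZ]
  | B4 | B8 => [:: H2; CZ; H2; CZ; H1; H2; CZ]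
  end.
Definition C_gates (c : Csym) : seq 'M[R]_(2 ^ n) :=
  match c with C1 => [::] | C2 => [:: oneq 1 Hm; oneq 1 Zm; oneq 1 Hm] end.

(* ---------- Z-circuits ----------
   zm = m, za = a, zb = [:: b_1; ...; b_(m-1)] (b_k = nth (k-1), acting on
   qubits k, k+1), zc = c.  The symbols are applied in the order
   A_a, B_{b_(m-1)}, ..., B_{b_1}, C_c. *)
Record zcircuit := ZCircuit { zm : nat; za : Asym; zb : seq Bsym; zc : Csym }.

Definition zb_at (L : zcircuit) (k : nat) : Bsym := nth B1 (zb L) k.-1.
Definition out_ty (L : zcircuit) (k : nat) : ty :=
  if k == zm L then A_out (za L) else B_out (zb_at L k).

Definition is_zcircuit (L : zcircuit) : Prop :=
  [/\ (1 <= zm L <= n)%N,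
      size (zb L) = (zm L).-1,
      (forall k, (1 <= k < zm L)%N -> B_in (zb_at L k) = out_ty L k.+1)
    & C_in (zc L) = out_ty L 1].

Definition zgates (L : zcircuit) : seq 'M[R]_(2 ^ n) :=
  A_gates (zm L) (za L)
  ++ flatten [seq B_gates k (zb_at L k) | k <- rev (iota 1 (zm L).-1)]
  ++ C_gates (zc L).

End Qubits.

(* Main.v *)
Require Import Defs.
From HB Require Import structures.
From mathcomp Require Import all_boot all_order all_algebra.
From mathcomp Require Import ring zify.
From Stdlib Require Import FunctionalExtensionality.
Set Implicit Arguments. Unset Strict Implicit. Unset Printing Implicit Defensive.
Import Order.TTheory GRing.Theory Num.Theory.
Local Open Scope ring_scope.
Section Bits.
Variable n : nat.

Lemma bits_div (i j : 'I_(2 ^ n)) :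
  (forall l : 'I_n, bit i l.+1 = bit j l.+1) ->
  forall d, (d <= n)%N -> (i %/ 2 ^ (n - d) = j %/ 2 ^ (n - d))%N.
Proof.
move=> hb; elim=> [|d IH] hd.
  by rewrite subn0 !divn_small.
have hdn : (d < n)%N by [].
have := hb (Ordinal hdn) => /=; rewrite /bit => hbd.
have e : (n - d = (n - d.+1).+1)%N by rewrite subnSK.
have := IH (ltnW hd); rewrite e expnSr !divnMA => IH'.
rewrite (divn_eq (i %/ 2 ^ (n - d.+1)) 2) (divn_eq (j %/ 2 ^ (n - d.+1)) 2).
by rewrite IH' !modn2 hbd.
Qed.

Lemma bits_inj (i j : 'I_(2 ^ n)) :
  (forall l : 'I_n, bit i l.+1 = bit j l.+1) -> i = j.
Proof.
move=> hb; apply/val_inj => /=.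
by have := bits_div hb (leqnn n); rewrite subnn expn0 !divn1.
Qed.

Definition bvec (t : 'I_(2 ^ n)) : {ffun 'I_n -> bool} := [ffun l : 'I_n => bit t (nat_of_ord l).+1].

Lemma bvec_bij : bijective bvec.
Proof.
apply: inj_card_bij.
  move=> i j /ffunP h; apply: bits_inj => l; by have := h l; rewrite !ffunE.
by rewrite card_ffun card_bool !card_ord.
Qed.

Lemma sum_bits (R : comRingType) (F : 'I_n -> bool -> R) :
  \sum_(t < 2 ^ n) \prod_(l < n) F l (bit t l.+1) = \prod_(l < n) \sum_(b : bool) F l b.
Proof.
rewrite bigA_distr_bigA /=.
rewrite (reindex bvec); last by apply: onW_bij; exact: bvec_bij.
by apply: eq_bigr => t _; apply: eq_bigr => l _; rewrite ffunE.
Qed.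
End Bits.
Section GT.
Variable R : rcfType.
Variable n : nat.

Definition gt (f : nat -> bool -> bool -> R) : 'M[R]_(2 ^ n) :=
  \matrix_(i, j) \prod_(l < n) f l.+1 (bit i l.+1) (bit j l.+1).

Lemma gt_mul f g : gt f *m gt g =
  gt (fun k a b => f k a false * g k false b + f k a true * g k true b).
Proof.
apply/matrixP => i j; rewrite !mxE.
under eq_bigr do rewrite !mxE -big_split /=.
rewrite (sum_bits (fun l c => f l.+1 (bit i l.+1) c * g l.+1 c (bit j l.+1))).
by apply: eq_bigr => l _; rewrite big_bool /= addrC.
Qed.

Lemma gt_scale (c : nat -> R) f :
  gt (fun k a b => c k * f k a b) = (\prod_(l < n) c l.+1) *: gt f.
Proof. by apply/matrixP => i j; rewrite !mxE big_split. Qed.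

Lemma gt_ext f g : (forall l : 'I_n, forall a b, f l.+1 a b = g l.+1 a b) -> gt f = gt g.
Proof. by move=> h; apply/matrixP => i j; rewrite !mxE; apply: eq_bigr => l _; rewrite h. Qed.

Lemma gt_delta : gt (fun _ a b => (a == b)%:R) = 1%:M.
Proof.
apply/matrixP => i j; rewrite !mxE.
case: (eqVneq i j) => [->|hij].
  by rewrite big1 // => l _; rewrite eqxx.
case: (boolP [forall l : 'I_n, bit i l.+1 == bit j l.+1]) => [/forallP h|].
  by case/eqP: hij; apply: bits_inj => l; apply/eqP.
rewrite negb_forall => /existsP [l hl].
by rewrite (bigD1 l) //= (negbTE hl) mul0r.
Qed.

Lemma tr_gt f : \tr (gt f) = \prod_(l < n) (f l.+1 false false + f l.+1 true true).
Proof.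
rewrite /mxtrace; under eq_bigr do rewrite mxE.
rewrite (sum_bits (fun l c => f l.+1 c c)).
by apply: eq_bigr => l _; rewrite big_bool /= addrC.
Qed.

End GT.
Definition pe {R : rcfType} (p : pauli) (a b : bool) : R :=
  match p, a, b with
  | pI, false, false => 1 | pI, true, true => 1
  | pX, false, true => 1 | pX, true, false => 1
  | pZ, false, false => 1 | pZ, true, true => -1
  | pXZ, false, true => -1 | pXZ, true, false => 1
  | _, _, _ => 0 end.

Section Entries.
Variable R : rcfType.

Lemma idx2_val a : nat_of_ord (idx2 a) = a.
Proof. by rewrite /idx2 inordK //; case: a. Qed.

Lemma idx2_eq a b : (idx2 a == idx2 b) = (a == b).
Proof. by rewrite -val_eqE /= !idx2_val; case: a; case: b. Qed.

Lemma pmat_pe p a b : pmat R p (idx2 a) (idx2 b) = pe p a b.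
Proof.
case: p => /=.
- by rewrite mxE idx2_eq; case: a; case: b.
- by rewrite mxE idx2_eq; case: a; case: b.
- by rewrite mxE idx2_eq idx2_val; case: a; case: b.
rewrite mxE big_ord_recr big_ord1 /= !mxE.
have e0 : (ord0 : 'I_2) = idx2 false by apply/val_inj; rewrite /= idx2_val.
have e1 : (ord_max : 'I_2) = idx2 true by apply/val_inj; rewrite /= idx2_val.
have e1' : (lift ord0 ord0 : 'I_2) = idx2 true by apply/val_inj; rewrite /= idx2_val.
have e0w : (widen_ord (leqnSn 1) ord0 : 'I_2) = idx2 false by apply/val_inj; rewrite /= idx2_val.
rewrite ?e0 ?e1 ?e1' ?e0w !idx2_eq !idx2_val.
by case: a; case: b => /=; rewrite ?mulr0 ?mul0r ?mulr1 ?mul1r ?addr0 ?add0r.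
Qed.

Lemma Hm_e a b : Hm R (idx2 a) (idx2 b) = (Num.sqrt 2)^-1 * (if a && b then -1 else 1).
Proof. by rewrite /Hm !mxE !idx2_val; case: a; case: b. Qed.

Lemma Zm_e a b : Zm R (idx2 a) (idx2 b) = pe pZ a b.
Proof. exact: (pmat_pe pZ). Qed.

Definition idx4v (a b : bool) : nat := (2 * a + b)%N.
Lemma idx4_val a b : nat_of_ord (idx4 a b) = idx4v a b.
Proof. by rewrite /idx4 inordK //; case: a; case: b. Qed.

Lemma CZm_e a b c d : CZm R (idx4 a b) (idx4 c d) =
  ((a == c) && (b == d))%:R * (if a && b then -1 else 1).
Proof.
rewrite /CZm mxE -val_eqE /= !idx4_val.
by case: a; case: b; case: c; case: d; rewrite /= ?mul1r ?mul0r.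
Qed.
End Entries.
Section Gates.
Variable R : rcfType.
Variable n : nat.

Definition delta (a b : bool) : R := (a == b)%:R.

Lemma ordk_proof k : (0 < k <= n)%N -> (k.-1 < n)%N.
Proof. by case: k => //= k /andP[]. Qed.

Lemma oneq_gt k (g : 'M[R]_2) (hk : (0 < k <= n)%N) :
  Defs.oneq n k g = gt n (fun k' a b => if k' == k then g (idx2 a) (idx2 b) else delta a b).
Proof.
apply/matrixP => i j; rewrite !mxE.
have hk' := ordk_proof hk.
have ek : (k.-1).+1 = k by case: k hk {hk'} => //.
rewrite [RHS](bigD1 (Ordinal hk')) //= ek eqxx; congr (_ * _).
apply: eq_big => [l|l hl].
  by rewrite -val_eqE /= -{1}ek (inj_eq succn_inj).
by rewrite (negbTE hl).
Qed.

Definition sgn2 (a b : bool) : R := if a && b then -1 else 1.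

Lemma twoq_diag k (hk : (0 < k)%N) (hk1 : (k < n)%N) :
  twoq n k (CZm R) = \matrix_(i, j) (sgn2 (bit i k) (bit i k.+1) * (i == j)%:R).
Proof.
apply/matrixP => i j; have hd := congr1 (fun M : 'M[R]_(2 ^ n) => M i j) (gt_delta R n).
rewrite !mxE in hd; rewrite [LHS]mxE [RHS]mxE -hd CZm_e.
have hk0 : (k.-1 < n)%N by case: k hk hk1 => // k _ /ltnW.
have ek : (k.-1).+1 = k by case: k hk {hk0 hk1}.
rewrite [in RHS](bigD1 (Ordinal hk0)) //= [in RHS](bigD1 (Ordinal hk1)) /=; last first.
  by rewrite -val_eqE /= -{1}ek eqn_leq ltnn.
rewrite ek /sgn2.
set A := \prod_(_ | _) _; set B := \prod_(_ | _) _.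
have -> : B = A.
  apply: eq_big => [l|l hl] //.
  by rewrite -!val_eqE /= -[l == k :> nat](inj_eq succn_inj) -[l == k.-1 :> nat](inj_eq succn_inj) ek.
by case: (bit i k); case: (bit i k.+1); case: (bit j k); case: (bit j k.+1) => /=;
  rewrite ?mul1r ?mul0r ?mulr0 ?mulr1 ?mulrA ?mulN1r ?mulrN1.
Qed.
End Gates.
Definition hH (p : pauli) : bool * pauli :=
  match p with pI => (false, pI) | pX => (false, pZ) | pZ => (false, pX) | pXZ => (true, pXZ) end.
Definition tZ (p : pauli) : bool * pauli :=
  match p with pI => (false, pI) | pX => (true, pX) | pZ => (false, pZ) | pXZ => (true, pXZ) end.
Definition tCZ (p1 p2 : pauli) : bool * pauli * pauli :=
  match p1, p2 with
| pI, pI => (false, pI, pI)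
| pI, pX => (false, pZ, pX)
| pI, pZ => (false, pI, pZ)
| pI, pXZ => (false, pZ, pXZ)
| pX, pI => (false, pX, pZ)
| pX, pX => (true, pXZ, pXZ)
| pX, pZ => (false, pX, pI)
| pX, pXZ => (true, pXZ, pX)
| pZ, pI => (false, pZ, pI)
| pZ, pX => (false, pI, pX)
| pZ, pZ => (false, pZ, pZ)
| pZ, pXZ => (false, pI, pXZ)
| pXZ, pI => (false, pXZ, pZ)
| pXZ, pX => (true, pX, pXZ)
| pXZ, pZ => (false, pXZ, pI)
| pXZ, pXZ => (true, pX, pX)
  end.
Definition pm (p1 p2 : pauli) : bool * pauli :=
  match p1, p2 with
| pI, pI => (false, pI)
| pI, pX => (false, pX)
| pI, pZ => (false, pZ)
| pI, pXZ => (false, pXZ)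
| pX, pI => (false, pX)
| pX, pX => (false, pI)
| pX, pZ => (false, pXZ)
| pX, pXZ => (false, pZ)
| pZ, pI => (false, pZ)
| pZ, pX => (true, pXZ)
| pZ, pZ => (false, pI)
| pZ, pXZ => (true, pX)
| pXZ, pI => (false, pXZ)
| pXZ, pX => (true, pZ)
| pXZ, pZ => (false, pX)
| pXZ, pXZ => (true, pI)
  end.

Definition upd (q : nat -> pauli) (k : nat) (p : pauli) : nat -> pauli :=
  fun j => if j == k then p else q j.

Section Conj.
Variable R : rcfType.
Variable n : nat.

Definition mat (s : bool) (q : nat -> pauli) : 'M[R]_(2 ^ n) :=
  (-1) ^+ s *: gt n (fun k => @pe R (q k)).

Lemma prod_at k (x : R) (hk : (0 < k <= n)%N) :
  \prod_(l < n) (if l.+1 == k then x else 1) = x.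
Proof.
have hk' := ordk_proof hk.
have ek : (k.-1).+1 = k by case: k hk {hk'} => //.
rewrite (bigD1 (Ordinal hk')) //= ek eqxx big1 ?mulr1 // => l hl.
suff -> : (l.+1 == k) = false by [].
apply/negbTE; move: hl; apply: contra => /eqP h; apply/eqP/val_inj => /=.
by rewrite -h.
Qed.

Lemma oneq_conj k (g : 'M[R]_2) s q (e : bool) p' (hk : (0 < k <= n)%N) :
  (forall a b, g (idx2 a) (idx2 false) * pe (q k) false b + g (idx2 a) (idx2 true) * pe (q k) true b
     = (-1) ^+ e * (pe p' a false * g (idx2 false) (idx2 b) + pe p' a true * g (idx2 true) (idx2 b))) ->
  Defs.oneq n k g *m mat s q = mat (s (+) e) (upd q k p') *m Defs.oneq n k g.
Proof.
move=> H; rewrite oneq_gt // /mat -scalemxAr -scalemxAl !gt_mul.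
rewrite signr_addb -scalerA; congr (_ *: _).
rewrite -{1}(prod_at ((-1) ^+ e) hk) -(@gt_scale R n (fun k0 => if k0 == k then (-1) ^+ e else 1)).
apply: gt_ext => l a b; rewrite /upd.
case: eqP => [->|_]; first exact: H.
by rewrite mul1r /delta; case: a; case: b => /=; ring.
Qed.

Lemma gt_split2 (f : nat -> bool -> bool -> R) k (hk : (0 < k)%N) (hk1 : (k < n)%N) (i j : 'I_(2 ^ n)) :
  \prod_(l < n) f l.+1 (bit i l.+1) (bit j l.+1) = f k (bit i k) (bit j k) * (f k.+1 (bit i k.+1) (bit j k.+1) *
     \prod_(l < n | (l.+1 != k) && (l.+1 != k.+1)) f l.+1 (bit i l.+1) (bit j l.+1)).
Proof.
have hk0 : (k.-1 < n)%N by case: k hk hk1 => // k _ /ltnW.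
have ek : (k.-1).+1 = k by case: k hk {hk0 hk1}.
rewrite (bigD1 (Ordinal hk0)) //= (bigD1 (Ordinal hk1)) /=; last first.
  by rewrite -val_eqE /= -{1}ek eqn_leq ltnn.
rewrite ek; congr (_ * (_ * _)); apply: eq_bigl => l.
by rewrite -!val_eqE /= -[l == k :> nat](inj_eq succn_inj) -[l == k.-1 :> nat](inj_eq succn_inj) ek.
Qed.

Lemma ring_aux (x e sg A B rest A' B' sg' : R) :
  sg * (A * B) = e * (A' * B') * sg' ->
  sg * (x * (A * (B * rest))) = (x * e) * (A' * (B' * rest)) * sg'.
Proof.
move=> H; transitivity (x * rest * (sg * (A * B))); first by ring.
by rewrite H; ring.
Qed.

Lemma twoq_conj k s q (e : bool) p1 p2 (hk : (0 < k)%N) (hk1 : (k < n)%N) :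
  (forall a1 a2 b1 b2, sgn2 R a1 a2 * (pe (q k) a1 b1 * pe (q k.+1) a2 b2) =
      (-1) ^+ e * (pe p1 a1 b1 * pe p2 a2 b2) * sgn2 R b1 b2) ->
  twoq n k (CZm R) *m mat s q = mat (s (+) e) (upd (upd q k p1) k.+1 p2) *m twoq n k (CZm R).
Proof.
move=> H; rewrite twoq_diag //; apply/matrixP => i j; rewrite !mxE.
rewrite (bigD1 i) //= big1 ?addr0; last first.
  by move=> t /negbTE ht; rewrite !mxE eq_sym ht mulr0 mul0r.
rewrite [RHS](bigD1 j) //= [X in _ = _ + X]big1 ?addr0; last first.
  by move=> t ht; rewrite !mxE (negbTE ht) !mulr0.
rewrite !mxE !eqxx !mulr1 (gt_split2 (fun k0 => @pe R (q k0)) hk hk1) (gt_split2 (fun k0 => @pe R (upd (upd q k p1) k.+1 p2 k0)) hk hk1).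
rewrite signr_addb.
have -> : \prod_(l < n | (l.+1 != k) && (l.+1 != k.+1))
     @pe R (upd (upd q k p1) k.+1 p2 l.+1) (bit i l.+1) (bit j l.+1) =
   \prod_(l < n | (l.+1 != k) && (l.+1 != k.+1)) @pe R (q l.+1) (bit i l.+1) (bit j l.+1).
  apply: eq_bigr => l /andP[h1 h2]; by rewrite /upd (negbTE h1) (negbTE h2).
have e1 : upd (upd q k p1) k.+1 p2 k = p1 by rewrite /upd (ltn_eqF (ltnSn k)) eqxx.
have e2 : upd (upd q k p1) k.+1 p2 k.+1 = p2 by rewrite /upd eqxx.
rewrite e1 e2; exact: ring_aux.
Qed.

Lemma mat_mul s q s' q' : mat s q *m mat s' q' =
  ((-1) ^+ s * (-1) ^+ s' * \prod_(l < n) (-1) ^+ (pm (q l.+1) (q' l.+1)).1) *: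
    gt n (fun k => @pe R (pm (q k) (q' k)).2).
Proof.
rewrite /mat -scalemxAr -scalemxAl gt_mul scalerA.
rewrite (_ : gt n _ = gt n (fun k a b => (-1) ^+ (pm (q k) (q' k)).1 * pe (pm (q k) (q' k)).2 a b)).
  by rewrite gt_scale scalerA (mulrC ((-1) ^+ s')).
apply: gt_ext => l a b.
by case: (q l.+1); case: (q' l.+1); case: a; case: b => /=; ring.
Qed.

End Conj.
Inductive sgate := GH of nat | GZ of nat | GCZ of nat.

Definition state := (bool * (nat -> pauli))%type.

Definition sact (g : sgate) (st : state) : state :=
  let: (s, q) := st in
  match g with
  | GH k => let: (e, p) := hH (q k) in (s (+) e, upd q k p)
  | GZ k => let: (e, p) := tZ (q k) in (s (+) e, upd q k p)
  | GCZ k => let: (e, p1, p2) := tCZ (q k) (q k.+1) in (s (+) e, upd (upd q k p1) k.+1 p2)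
  end.

Definition sact_list (gs : seq sgate) (st : state) : state :=
  foldl (fun st g => sact g st) st gs.

Section Circ.
Variable R : rcfType.
Variable n : nat.

Definition gm (g : sgate) : 'M[R]_(2 ^ n) :=
  match g with
  | GH k => Defs.oneq n k (Hm R)
  | GZ k => Defs.oneq n k (Zm R)
  | GCZ k => twoq n k (CZm R)
  end.

Definition gvalid (g : sgate) : bool :=
  match g with
  | GH k | GZ k => (0 < k <= n)%N
  | GCZ k => (0 < k)%N && (k < n)%N
  end.

Definition smat (st : state) : 'M[R]_(2 ^ n) := mat R n st.1 st.2.

Lemma gm_comm g st : gvalid g -> gm g *m smat st = smat (sact g st) *m gm g.
Proof.
case: st => s q; case: g => k /= hk.
- case Eq: (q k) => /=; apply: oneq_conj => // a b; rewrite /= !Hm_e Eq;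
    by case: a; case: b => /=; ring.
- case Eq: (q k) => /=; apply: oneq_conj => // a b; rewrite /= !Zm_e Eq;
    by case: a; case: b => /=; ring.
- case/andP: hk => hk hk1.
  case Eq1: (q k); case Eq2: (q k.+1) => /=; apply: twoq_conj => // a1 a2 b1 b2;
  rewrite /sgn2 /= Eq1 Eq2;
  by case: a1; case: a2; case: b1; case: b2 => /=; ring.
Qed.

Lemma sqrt2_aux : (Num.sqrt (2 : R))^-1 * (Num.sqrt 2)^-1 * 2 = 1.
Proof.
rewrite -invfM -expr2 sqr_sqrtr ?ler0n // mulVf //.
by rewrite pnatr_eq0.
Qed.

Lemma gm_inv g : gvalid g -> gm g *m gm g = 1%:M.
Proof.
case: g => k /= hk.
- rewrite oneq_gt // gt_mul -(gt_delta R n); apply: gt_ext => l a b.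
  case: eqP => _; last by rewrite /delta; case: a; case: b => /=; ring.
  rewrite !Hm_e; set c := (Num.sqrt (2 : R))^-1.
  have hc := sqrt2_aux; rewrite -/c in hc.
  case: a; case: b => /=; rewrite /delta /=;
    try (by ring); by transitivity (c * c * 2); [ring | rewrite hc].
- rewrite oneq_gt // gt_mul -(gt_delta R n); apply: gt_ext => l a b.
  case: eqP => _; last by rewrite /delta; case: a; case: b => /=; ring.
  by rewrite !Zm_e /delta; case: a; case: b => /=; ring.
- case/andP: hk => hk hk1; rewrite twoq_diag //; apply/matrixP => i j; rewrite !mxE.
  rewrite (bigD1 i) //= big1 ?addr0; last first.
    by move=> t /negbTE ht; rewrite !mxE eq_sym ht mulr0 mul0r.
  rewrite !mxE eqxx mulr1 mulrA.
  have -> : sgn2 R (bit i k) (bit i k.+1) * sgn2 R (bit i k) (bit i k.+1) = 1.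
    by rewrite /sgn2; case: (_ && _); rewrite ?mulrNN mulr1.
  by rewrite mul1r.
Qed.

Lemma gm_unit g : gvalid g -> gm g \in unitmx.
Proof. by move=> h; case: (mulmx1_unit (gm_inv h)). Qed.

Lemma circ_foldl (gs : seq 'M[R]_(2 ^ n)) (A : 'M[R]_(2 ^ n)) :
  foldl (fun acc g => g *m acc) A gs = circ_op gs *m A.
Proof.
elim: gs A => [|g gs IH] A /=; first by rewrite /circ_op /= mul1mx.
by rewrite IH [in RHS]/circ_op /= IH mulmx1 mulmxA.
Qed.

Lemma circ_cons g gs : circ_op (g :: gs) = circ_op gs *m (g : 'M[R]_(2 ^ n)).
Proof. by rewrite {1}/circ_op /= circ_foldl mulmx1. Qed.

Lemma circ_comm gs st : all gvalid gs ->
  circ_op (map gm gs) *m smat st = smat (sact_list gs st) *m circ_op (map gm gs).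
Proof.
elim: gs st => [|g gs IH] st /=.
  by move=> _; rewrite /circ_op /= mul1mx mulmx1.
case/andP=> hg hgs; rewrite circ_cons -mulmxA gm_comm // mulmxA IH // -mulmxA //.
Qed.

Lemma circ_unit gs : all gvalid gs -> circ_op (map gm gs) \in unitmx.
Proof.
elim: gs => [|g gs IH] /=; first by rewrite /circ_op /= unitmx1.
by case/andP=> hg hgs; rewrite circ_cons unitmx_mul IH // gm_unit.
Qed.

Lemma circ_conj gs st : all gvalid gs ->
  conjm (circ_op (map gm gs)) (smat st) = smat (sact_list gs st).
Proof.
move=> h; rewrite /conjm circ_comm // mulmxK //; exact: circ_unit.
Qed.

End Circ.
Inductive lgate := LH1 | LH2 | LCZ.

Definition place (k : nat) (g : lgate) : sgate :=
  match g with LH1 => GH k | LH2 => GH k.+1 | LCZ => GCZ k end.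

Definition lact (g : lgate) (t : bool * pauli * pauli) : bool * pauli * pauli :=
  let: (s, p1, p2) := t in
  match g with
  | LH1 => let: (e, p) := hH p1 in (s (+) e, p, p2)
  | LH2 => let: (e, p) := hH p2 in (s (+) e, p1, p)
  | LCZ => let: (e, a, b) := tCZ p1 p2 in (s (+) e, a, b)
  end.

Definition lact_list (gs : seq lgate) t := foldl (fun t g => lact g t) t gs.

Lemma upd2_eq (q q' : nat -> pauli) k a b :
  (forall j, j != k -> j != k.+1 -> q' j = q j) ->
  upd (upd q' k a) k.+1 b = upd (upd q k a) k.+1 b.
Proof.
move=> h; apply: functional_extensionality => j; rewrite /upd.
case: (eqVneq j k.+1) => // h1; case: (eqVneq j k) => // h2; exact: h.
Qed.

Lemma place_act lgs s q k :
  sact_list (map (place k) lgs) (s, q) =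
  let: (s', p1, p2) := lact_list lgs (s, q k, q k.+1) in (s', upd (upd q k p1) k.+1 p2).
Proof.
elim: lgs s q => [|g lgs IH] s q /=.
  congr (_, _); apply: functional_extensionality => j; rewrite /upd.
  case: (eqVneq j k.+1) => [->|h1] //.
  by case: (eqVneq j k) => [->|h2].
have nk : (k.+1 == k) = false by rewrite gtn_eqF.
have nk' : (k == k.+1) = false by rewrite ltn_eqF.
case: g => /=.
- case E: (hH (q k)) => [e p] /=.
  rewrite IH /upd eqxx nk.
  case: (lact_list _ _) => [[s' p1] p2].
  by congr (_, _); rewrite -/(upd _ _ _) (upd2_eq (q := q)) // => j /negbTE ->.
- case E: (hH (q k.+1)) => [e p] /=.
  rewrite IH /upd eqxx nk'.
  case: (lact_list _ _) => [[s' p1] p2].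
  by congr (_, _); rewrite -/(upd _ _ _) (upd2_eq (q := q)) // => j _ /negbTE ->.
- case E: (tCZ (q k) (q k.+1)) => [[e a] b] /=.
  rewrite IH /upd eqxx nk nk' eqxx.
  case: (lact_list _ _) => [[s' p1] p2].
  congr (_, _); rewrite -/(upd _ _ _) -/(upd _ _ _).
  rewrite (upd2_eq (q := q)) // => j h1 h2.
  by rewrite /upd (negbTE h1) (negbTE h2).
Qed.

Definition lbg (b : Bsym) : seq lgate :=
  match b with
  | B1 | B5 => [:: LH2; LCZ; LH1; LH2; LCZ; LH1; LH2; LCZ]
  | B2 | B6 => [:: LCZ; LH1; LH2; LCZ]
  | B3 | B7 => [:: LH1; LCZ; LH1; LH2; LCZ]
  | B4 | B8 => [:: LH2; LCZ; LH2; LCZ; LH1; LH2; LCZ]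
  end.

Definition T (t : ty) : pauli := match t with single => pZ | double => pXZ end.
Definition yv (b : Bsym) : pauli :=
  match b with B1 | B5 => pI | B2 | B6 => pX | B3 | B7 => pZ | B4 | B8 => pXZ end.
Definition av (a : Asym) : pauli := match a with A1 => pZ | A2 => pX | A3 => pXZ end.
Definition isC2 (c : Csym) : bool := if c is C2 then true else false.

Lemma btab b s : lact_list (lbg b) (s, yv b, T (B_in b)) = (s, T (B_out b), pI).
Proof. by case: b; case: s. Qed.

Definition sA (m : nat) (a : Asym) : seq sgate := match a with A2 => [:: GH m] | _ => [::] end.
Definition sC (c : Csym) : seq sgate := match c with C1 => [::] | C2 => [:: GH 1; GZ 1; GH 1] end.
Definition szg (L : zcircuit) : seq sgate :=
  sA (zm L) (za L) ++ flatten [seq map (place k) (lbg (zb_at L k)) | k <- rev (iota 1 (zm L).-1)]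
  ++ sC (zc L).

Lemma zgates_eq (R : rcfType) n L : zgates R n L = map (gm R n) (szg L).
Proof.
rewrite /zgates /szg !map_cat; congr (_ ++ _ ++ _).
- by case: (za L).
- rewrite map_flatten -map_comp; congr flatten; apply: eq_map => k /=.
  by case: (zb_at L k).
- by case: (zc L).
Qed.

Lemma sact_list_cat l1 l2 st : sact_list (l1 ++ l2) st = sact_list l2 (sact_list l1 st).
Proof. by rewrite /sact_list foldl_cat. Qed.

Definition Phi (L : zcircuit) : state :=
  (isC2 (zc L), fun l => if (0 < l < zm L)%N then yv (zb_at L l)
                          else if l == zm L then av (za L) else pI).

Definition Psi (L : zcircuit) (s0 : bool) (j : nat) : state :=
  (s0, fun l => if (0 < l <= j)%N then yv (zb_at L l)
               else if l == j.+1 then T (out_ty L j.+1) else pI).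

Definition z1q (l : nat) : pauli := if l == 1%N then pZ else pI.

Lemma mid L s0 (hB : forall k, (1 <= k < zm L)%N -> B_in (zb_at L k) = out_ty L k.+1) :
  forall j, (j < zm L)%N ->
  sact_list (flatten [seq map (place k) (lbg (zb_at L k)) | k <- rev (iota 1 j)]) (Psi L s0 j)
  = Psi L s0 0.
Proof.
elim=> [//|j IH] hj.
have -> : rev (iota 1 j.+1) = j.+1 :: rev (iota 1 j).
  by rewrite -[j.+1]addn1 iotaD rev_cat /= add1n addn1.
rewrite /= sact_list_cat /Psi place_act /=.
rewrite ltnSn ltnn eqxx -(hB j.+1) ?btab; last by rewrite hj.
apply: etrans (IH (ltnW hj)); rewrite /Psi.
congr (sact_list _ (_, _)); apply: functional_extensionality => l; rewrite /upd.
case: (eqVneq l j.+2) => [->|h2].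
  have f1 : (0 < j.+2 <= j)%N = false by lia.
  have f2 : (j.+2 == j.+1) = false by lia.
  by rewrite f1 f2.
case: (eqVneq l j.+1) => [->|h1].
  have f1 : (0 < j.+1 <= j)%N = false by lia.
  rewrite f1 /out_ty.
  by have -> : (j.+1 == zm L) = false by lia.
have f : (0 < l <= j.+1)%N = (0 < l <= j)%N by lia.
by rewrite f.
Qed.

Lemma szg_Phi n L : is_zcircuit n L -> sact_list (szg L) (Phi L) = (false, z1q).
Proof.
case=> /andP[hm1 hmn] hsz hB hC.
rewrite /szg !sact_list_cat.
have hA : sact_list (sA (zm L) (za L)) (Phi L) = Psi L (isC2 (zc L)) (zm L).-1.
  rewrite /Phi /Psi; move: hm1; case E: (zm L) => [//|m] _ /=.
  have hout : out_ty L m.+1 = A_out (za L) by rewrite /out_ty E eqxx.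
  rewrite hout; case: (za L) => //=.
  rewrite ltnn eqxx /=; congr (_, _); first by rewrite addbF.
  apply: functional_extensionality => l; rewrite /upd.
  case: (eqVneq l m.+1) => [->|h].
    have f : (0 < m.+1 <= m)%N = false by lia.
    by rewrite f.
  by rewrite ?(negbTE h).
rewrite hA mid //; last first.
  - by move: hm1; case: (zm L).
rewrite /Psi /=.
have h1 : out_ty L 1 = single by rewrite -hC.
rewrite h1.
case: (zc L) => /=.
  by congr (_, _); apply: functional_extensionality => l; case: l.
rewrite /upd /=; congr (_, _); apply: functional_extensionality => l.
by case: l => [|[|l]].
Qed.
Definition peqb (p p' : pauli) : bool :=
  match p, p' with
  | pI, pI | pX, pX | pZ, pZ | pXZ, pXZ => true | _, _ => false end.
Lemma peqP : Equality.axiom peqb.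
Proof. by case; case; constructor. Qed.
HB.instance Definition _ := hasDecEq.Build pauli peqP.

Section Final.
Variable R : rcfType.
Variable n : nat.

Lemma tens_gt (F : 'I_n -> 'M[R]_2) f :
  (forall l : 'I_n, forall a b, F l (idx2 a) (idx2 b) = f l.+1 a b) -> tens F = gt n f.
Proof. by move=> h; apply/matrixP => i j; rewrite !mxE; apply: eq_bigr => l _; rewrite h. Qed.

Lemma Z1_eq : Z1 R n = smat R n (false, z1q).
Proof.
rewrite /smat /mat /= expr0 scale1r /Z1; apply: tens_gt => l a b.
rewrite /z1q eqSS; case: eqP => _; first exact: Zm_e.
by rewrite mxE idx2_eq; case: a; case: b.
Qed.

Lemma pe_pI a b : @pe R pI a b = delta R a b.
Proof. by case: a; case: b. Qed.

Lemma sign_neq0 (b : bool) : ((-1) ^+ b : R) != 0.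
Proof. by rewrite signr_eq0. Qed.

Lemma prod_sign_neq0 (F : 'I_n -> bool) : \prod_(l < n) ((-1) ^+ F l : R) != 0.
Proof. by apply/prodf_neq0 => l _; exact: sign_neq0. Qed.

Definition Dt (p p' : pauli) : R :=
  pe (pm p p').2 false false + pe (pm p p').2 true true.

Lemma Dt_val p p' : Dt p p' = if p == p' then 2 else 0.
Proof. by case: p; case: p' => /=; rewrite /Dt /=; ring. Qed.

Lemma tr_mat_mul s q s' q' : \tr (mat R n s q *m mat R n s' q') =
  ((-1) ^+ s * (-1) ^+ s' * \prod_(l < n) (-1) ^+ (pm (q l.+1) (q' l.+1)).1) *
  \prod_(l < n) Dt (q l.+1) (q' l.+1).
Proof. by rewrite mat_mul mxtraceZ tr_gt. Qed.

Lemma tr_self_neq0 s q : \tr (mat R n s q *m mat R n s q) != 0.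
Proof.
rewrite tr_mat_mul mulf_neq0 //.
  by rewrite !mulf_neq0 ?sign_neq0 ?prod_sign_neq0.
apply/prodf_neq0 => l _; rewrite Dt_val eqxx; by rewrite pnatr_eq0.
Qed.

Lemma mat_inj s q s' q' : mat R n s q = mat R n s' q' ->
  s = s' /\ forall l : 'I_n, q l.+1 = q' l.+1.
Proof.
move=> H.
have hq : forall l : 'I_n, q l.+1 = q' l.+1.
  case: (boolP [forall l : 'I_n, q l.+1 == q' l.+1]) => [/forallP h l|].
    exact/eqP.
  rewrite negb_forall => /existsP [l hl].
  have := tr_self_neq0 s q; rewrite {2}H tr_mat_mul [\prod_(l0 < n) Dt _ _](bigD1 l) //= Dt_val (negbTE hl).
  by rewrite mul0r mulr0 eqxx.
split=> //.
have eg : mat R n s' q' = mat R n s' q.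
  by rewrite /mat (gt_ext (g := fun k => @pe R (q k))) // => l a b; rewrite hq.
rewrite eg in H.
have := congr1 (fun M => \tr (M *m mat R n false q)) H => /=.
rewrite !tr_mat_mul => e.
apply: (@signr_inj R); apply/eqP; move/eqP: e.
rewrite -!mulrA (inj_eq (mulIf _)) //.
rewrite mulf_neq0 ?mulf_neq0 ?sign_neq0 ?prod_sign_neq0 //.
apply/prodf_neq0 => l _; rewrite Dt_val eqxx; by rewrite pnatr_eq0.
Qed.

Lemma conj_inj (C X Y : 'M[R]_(2 ^ n)) : C \in unitmx -> conjm C X = conjm C Y -> X = Y.
Proof.
move=> hC h.
have e : forall Z, Z = invmx C *m conjm C Z *m C.
  by move=> Z; rewrite /conjm !mulmxA mulVmx // mul1mx -mulmxA mulVmx // mulmx1.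
by rewrite (e X) (e Y) h.
Qed.

Lemma sq_parity s q : mat R n s q *m mat R n s q = 1%:M ->
  ~~ odd (\sum_(l < n) (q l.+1 == pXZ)).
Proof.
rewrite mat_mul.
rewrite (gt_ext (g := fun _ a b => delta R a b)); last first.
  by move=> l a b; case: (q l.+1); case: a; case: b.
rewrite gt_delta => h.
have i0 : 'I_(2 ^ n) by exists 0%N; rewrite expn_gt0.
have := congr1 (fun M : 'M[R]_(2 ^ n) => M i0 i0) h; rewrite !mxE eqxx mulr1 => {}h.
have hs : (-1) ^+ s * (-1) ^+ s = (1 : R) by rewrite -signr_addb addbb.
rewrite hs mul1r in h.
have hp : \prod_(l < n) ((-1) ^+ (pm (q l.+1) (q l.+1)).1 : R) =
          (-1) ^+ (\sum_(l < n) (q l.+1 == pXZ)).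
  rewrite (big_morph (fun k : nat => ((-1) ^+ k : R)) (id1 := 1) (op1 := *%R) (@exprD _ _) (expr0 _)).
  by apply: eq_bigr => l _; case: (q l.+1).
rewrite hp -signr_odd in h.
apply/negP => ho; rewrite ho /= in h.
by move/eqP: h; rewrite -subr_eq0 -opprD oppr_eq0 (pnatr_eq0 R 2).
Qed.

End Final.
Definition sgeqb g h := match g, h with
  | GH a, GH b | GZ a, GZ b | GCZ a, GCZ b => a == b | _, _ => false end.
Lemma sgeqP : Equality.axiom sgeqb.
Proof. by case=> a; case=> b /=; try constructor; try apply: (iffP eqP) => [->|[]]. Qed.
HB.instance Definition _ := hasDecEq.Build sgate sgeqP.
Definition lgeqb g h := match g, h with
  | LH1, LH1 | LH2, LH2 | LCZ, LCZ => true | _, _ => false end.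
Lemma lgeqP : Equality.axiom lgeqb.
Proof. by case; case; constructor. Qed.
HB.instance Definition _ := hasDecEq.Build lgate lgeqP.

Definition bsel (t : ty) (p : pauli) : Bsym :=
  match t, p with
  | single, pI => B1 | single, pX => B2 | single, pZ => B3 | single, pXZ => B4
  | Defs.double, pI => B5 | Defs.double, pX => B6 | Defs.double, pZ => B7 | Defs.double, pXZ => B8 end.
Definition flip (t : ty) : ty := match t with single => Defs.double | Defs.double => single end.

Lemma yv_bsel t p : yv (bsel t p) = p. Proof. by case: t; case: p. Qed.
Lemma Bin_bsel t p : B_in (bsel t p) = t. Proof. by case: t; case: p. Qed.
Lemma Bout_bsel t p : B_out (bsel t p) = if p == pXZ then flip t else t.
Proof. by case: t; case: p. Qed.
Lemma bsel_inv b : bsel (B_in b) (yv b) = b. Proof. by case: b. Qed.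

Lemma szg_valid n L : (0 < n)%N -> is_zcircuit n L -> all (gvalid n) (szg L).
Proof.
move=> hn [/andP[hm1 hmn] hsz hB hC].
rewrite /szg !all_cat; apply/and3P; split.
- by case: (za L) => //=; rewrite hm1 hmn.
- apply/allP => g /flattenP [s /mapP [k hk ->] hg].
  move: hk; rewrite mem_rev mem_iota => hk.
  move/mapP: hg => [g' _ ->]; case: g' => /=; lia.
- by case: (zc L) => //=; rewrite hn.
Qed.

Lemma Phi_inj n L L' : is_zcircuit n L -> is_zcircuit n L' ->
  (Phi L).1 = (Phi L').1 -> (forall l, (0 < l <= n)%N -> (Phi L).2 l = (Phi L').2 l) -> L = L'.
Proof.
case=> /andP[hm1 hmn] hsz hB hC; case=> /andP[hm1' hmn'] hsz' hB' hC' hs hq.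
have av_ne : forall a, av a != pI by case.
have hPm : forall L0, (Phi L0).2 (zm L0) = av (za L0).
  by move=> L0; rewrite /Phi /= ltnn andbF eqxx.
have hPo : forall L0 l, (zm L0 < l)%N -> (Phi L0).2 l = pI.
  move=> L0 l h; rewrite /Phi /=.
  have -> : (0 < l < zm L0)%N = false by lia.
  by have -> : (l == zm L0) = false by lia.
have em : zm L = zm L'.
  case: (ltngtP (zm L) (zm L')) => // h.
  - have := hq (zm L'); rewrite hPm hPo // => /(_ _); rewrite hm1' hmn' => /(_ isT) e.
    by move: (av_ne (za L')); rewrite -e eqxx.
  - have := hq (zm L); rewrite hPm (hPo L') // => /(_ _); rewrite hm1 hmn => /(_ isT) e.
    by move: (av_ne (za L)); rewrite e eqxx.
have ea : za L = za L'.
  have := hq (zm L); rewrite hm1 hmn => /(_ isT); rewrite hPm em hPm.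
  by case: (za L); case: (za L').
have ec : zc L = zc L'.
  by move: hs; rewrite /Phi /=; case: (zc L); case: (zc L').
have hyv : forall k, (0 < k < zm L)%N -> yv (zb_at L k) = yv (zb_at L' k).
  move=> k hk; have := hq k; rewrite /Phi /= -em hk.
  have -> : (0 < k <= n)%N by lia.
  by move=> /(_ isT).
have hout : forall d, (d < zm L)%N -> out_ty L (zm L - d) = out_ty L' (zm L - d).
  elim=> [|d IH] hd.
    by rewrite subn0 /out_ty eqxx em eqxx ea.
  set k := (zm L - d.+1)%N.
  have hk : (0 < k < zm L)%N by rewrite /k; lia.
  have hk1 : k.+1 = (zm L - d)%N by rewrite /k; lia.
  rewrite /out_ty.
  have -> : (k == zm L) = false by lia.
  have -> : (k == zm L') = false by rewrite -em; lia.
  rewrite -(bsel_inv (zb_at L k)) -(bsel_inv (zb_at L' k)) hB // hB' -?em // hk1 IH ?hyv //.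
  by rewrite ltnW.
have hb : forall k, (0 < k < zm L)%N -> zb_at L k = zb_at L' k.
  move=> k hk.
  rewrite -(bsel_inv (zb_at L k)) -(bsel_inv (zb_at L' k)) hB // hB' -?em // hyv //.
  have -> : k.+1 = (zm L - (zm L - k.+1))%N by lia.
  by rewrite hout //; lia.
have ezb : zb L = zb L'.
  apply: (@eq_from_nth _ B1); first by rewrite hsz hsz' em.
  move=> i hi; have := hb i.+1; rewrite /zb_at /=; apply.
  by rewrite hsz in hi; lia.
move: em ea ec ezb; case: L {hm1 hmn hsz hB hC hs hq hPm hPo hyv hout hb} => m a b c.
by case: L' {hm1' hmn' hsz' hB' hC'} => m' a' b' c' /= -> -> -> ->.
Qed.
Lemma exist_L n (s : bool) (q : nat -> pauli) : (0 < n)%N ->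
  (exists l : 'I_n, q l.+1 != pI) -> ~~ odd (\sum_(l < n) (q l.+1 == pXZ)) ->
  exists L, is_zcircuit n L /\ (Phi L).1 = s /\
            (forall l, (0 < l <= n)%N -> (Phi L).2 l = q l).
Proof.
move=> hn [l0 hl0] hY.
pose P := fun k => (0 < k <= n)%N && (q k != pI).
have exP : exists k, P k by exists l0.+1; rewrite /P hl0 ltn_ord andbT.
have ubP : forall k, P k -> (k <= n)%N by move=> k /andP[/andP[]].
case: (ex_maxnP exP ubP) => m /andP[/andP[hm1 hmn] hqm] hmax.
have hzero : forall l, (m < l <= n)%N -> q l = pI.
  move=> l hl; apply/eqP; apply: contraT => hq.
  have := hmax l; rewrite /P hq andbT.
  have -> : (0 < l <= n)%N by lia.
  by move=> /(_ isT); lia.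
pose tyof k := if odd (\sum_(k <= l < m.+1) (q l == pXZ)) then Defs.double else single.
pose a := match q m with pZ => A1 | pX => A2 | _ => A3 end.
pose L := ZCircuit m a [seq bsel (tyof k.+1) (q k) | k <- iota 1 m.-1] (if s then C2 else C1).
have hzb : forall k, (0 < k < m)%N -> zb_at L k = bsel (tyof k.+1) (q k).
  move=> k hk; rewrite /zb_at /= (nth_map 0%N); last by rewrite size_iota; lia.
  rewrite nth_iota; last by lia.
  have hk0 : (0 < k)%N by case/andP: hk.
  by rewrite add1n prednK.
have htyS : forall k, (0 < k < m)%N -> tyof k = if q k == pXZ then flip (tyof k.+1) else tyof k.+1.
  move=> k hk; rewrite /tyof big_ltn; last by lia.
  by rewrite oddD; case: (q k == pXZ); case: (odd (\sum_(k.+1 <= l < m.+1) _)).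
have htym : tyof m = if q m == pXZ then Defs.double else single.
  by rewrite /tyof big_nat1; case: (q m == pXZ).
have hout : forall k, (0 < k <= m)%N -> out_ty L k = tyof k.
  move=> k hk; rewrite /out_ty /=.
  case: (eqVneq k m) => [->|hkm].
    by rewrite htym /a; move: hqm; case: (q m).
  rewrite hzb; last by lia.
  rewrite Bout_bsel (htyS k) //; lia.
exists L; split; last split.
- split => /=.
  + by rewrite hm1 hmn.
  + by rewrite size_map size_iota.
  + move=> k hk; rewrite hzb // Bin_bsel hout //; lia.
  + rewrite hout /=; last by lia.
    rewrite /tyof.
    suff -> : (\sum_(1 <= l < m.+1) (q l == pXZ) = \sum_(l < n) (q l.+1 == pXZ))%N.
      by rewrite (negbTE hY).
    rewrite -(big_mkord xpredT (fun l => (q l.+1 == pXZ) : nat)).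
    rewrite -{1}[1%N]add0n big_addn subn1 /=.
    rewrite [RHS](@big_cat_nat _ _ _ m) //=.
    rewrite [X in (_ = _ + X)%N]big1_seq ?addn0.
      by apply: eq_bigr => i _; rewrite addn1.
    move=> i /andP[_]; rewrite mem_iota => hi.
    by rewrite hzero //; lia.
- by rewrite /Phi /=; case: (s).
- move=> l hl; rewrite /Phi /=.
  case: (boolP (0 < l < m)%N) => hlm.
    by rewrite hzb // yv_bsel.
  case: (eqVneq l m) => [->|hlm'].
    by rewrite /a; move: hqm; case: (q m).
  by rewrite hzero //; lia.
Qed.

Theorem proposition4p11 (R : rcfType) (n : nat) (P : 'M[R]_(2 ^ n)) :
  (1 <= n)%N ->
  in_real_pauli P ->
  P *m P = 1%:M ->
  P <> 1%:M -> P <> - 1%:M ->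
  exists! L : zcircuit,
    is_zcircuit n L /\ conjm (circ_op (zgates R n L)) P = Z1 R n.
Proof.
move=> hn [s [ps hP]] hPP hP1 hPm1.
pose q := fun k => if k is k'.+1 then (if (insub k' : option 'I_n) is Some l then ps l else pI) else pI.
have hq : forall l : 'I_n, q l.+1 = ps l by move=> l; rewrite /q valK.
have hPq : P = smat R n (s, q).
  rewrite hP /smat /mat /=; congr (_ *: _); apply: tens_gt => l a b.
  by rewrite pmat_pe hq.
have hY : ~~ odd (\sum_(l < n) (q l.+1 == pXZ)).
  by apply: (@sq_parity R n s); rewrite -/(smat R n (s, q)) -hPq.
have hne : exists l : 'I_n, q l.+1 != pI.
  case: (boolP [exists l : 'I_n, q l.+1 != pI]) => [/existsP //|].
  rewrite negb_exists => /forallP h; exfalso.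
  have : P = (-1) ^+ s *: 1%:M.
    rewrite hPq /smat /mat /= (gt_ext (g := fun _ a b => delta R a b)) ?gt_delta //.
    by move=> l a b; move: (h l); rewrite negbK => /eqP ->; rewrite pe_pI.
  by case: s {hP hPq} => /=; rewrite ?expr0 ?expr1 ?scale1r ?scaleN1r.
have key : forall L', is_zcircuit n L' ->
    conjm (circ_op (zgates R n L')) (smat R n (Phi L')) = Z1 R n.
  by move=> L' h; rewrite zgates_eq circ_conj ?szg_valid // (szg_Phi h) Z1_eq.
case: (exist_L s hn hne hY) => L [hL [hs hag]].
have hPL : P = smat R n (Phi L).
  rewrite hPq /smat /mat hs; congr (_ *: _); apply: gt_ext => l a b.
  by rewrite hag //; apply/andP; split => //; exact: ltn_ord.
exists L; split; first by split => //; rewrite hPL key.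
move=> L' [hL' hc'].
have hP' : P = smat R n (Phi L').
  apply: (conj_inj (C := circ_op (zgates R n L'))).
    by rewrite zgates_eq circ_unit // szg_valid.
  by rewrite hc' key.
move: hP'; rewrite hPL /smat => /mat_inj [h1 h2].
apply: (Phi_inj hL hL' h1) => -[//|l] /andP[_ hl2].
exact: (h2 (Ordinal hl2)).
Qed.
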